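(* In the negative-fill variable-processor cup game against a greedy emptier, suppose that at the beginning of some round all fills are (possibly negative) half-integers (integer multiples of $1/2$). Let $k\in\mathbb Z$ and $q\in\mathbb N$, $q\ge1$, and suppose at least $2q$ cups have fill exactly $k/2$. Then the filler can ensure that at the end of the round exactly $q$ of the cups of fill $k/2$ have fill $(k+1)/2$, exactly $q$ of the cups of fill $k/2$ have fill $(k-1)/2$, and all other cups are unchanged.
   Context: Negative-fill variable-processor cup game on $n$ cups: real fills; each round the filler chooses an integer $1\le p\le n$ and reals $a_i\in[0,1]$ with $\sum a_i=p$ and adds $a_i$ to cup $i$; then the emptier chooses $p$ distinct cups and subtracts exactly $1$ from each. The greedy emptier subtracts from the $p$ fullest cups after the filler's move (ties broken arbitrarily). *)

(* Defs.v *)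
From mathcomp Require Import all_boot all_order all_algebra.
Set Implicit Arguments. Unset Strict Implicit. Unset Printing Implicit Defensive.
Import Order.TTheory GRing.Theory Num.Theory.
Local Open Scope ring_scope.

Definition half_integer (R : realFieldType) (x : R) : Prop :=
  exists z : int, x = z%:~R / 2.

Definition filler_move (R : realFieldType) (n : nat) (p : nat) (a : 'I_n -> R) : Prop :=
  [/\ (1 <= p <= n)%N, (forall i, 0 <= a i <= 1) & \sum_(i < n) a i = p%:R].

(* S is a possible choice of the greedy emptier on the fills g (after the
   filler's move): S consists of p distinct cups which are p fullest ones
   (ties broken arbitrarily, i.e. any such S is allowed). *)
Definition greedy_choice (R : realFieldType) (n : nat) (g : 'I_n -> R) (p : nat)
  (S : {set 'I_n}) : Prop :=
  #|S| = p /\ (forall i j, i \in S -> j \notin S -> g j <= g i).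

Definition round_result (R : realFieldType) (n : nat) (f a : 'I_n -> R)
  (S : {set 'I_n}) : 'I_n -> R :=
  fun i => f i + a i - (if i \in S then 1 else 0).

(* Main.v *)
Require Import Defs.
From mathcomp Require Import all_boot all_order all_algebra.
From mathcomp Require Import lra zify.
Import Order.TTheory GRing.Theory Num.Theory.
Local Open Scope ring_scope.

Lemma pick_subset {T : finType} {C : {set T}} {m : nat} :
  (m <= #|C|)%N -> exists X : {set T}, X \subset C /\ #|X| = m.
Proof.
move=> hm; exists [set x in take m (enum C)]; split.
  by apply/subsetP=> x; rewrite inE => /mem_take; rewrite mem_enum.
rewrite cardsE; move/card_uniqP: (take_uniq m (enum_uniq (mem C))) ->.
by rewrite size_takel // -cardE.
Qed.

Lemma half_gt (R : realFieldType) (z k : int) :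
  k%:~R / 2 < z%:~R / 2 :> R -> k%:~R / 2 + 1/2 <= z%:~R / 2 :> R.
Proof.
rewrite ltr_pM2r ?invr_gt0 ?ltr0n // ltr_int -lezD1 => h.
have : (k + 1)%:~R <= z%:~R :> R by rewrite ler_int.
rewrite intrD /= => h2; lra.
Qed.

Theorem lemma5p3 (R : realFieldType) (n : nat) (f : 'I_n -> R) (k : int) (q : nat) :
  (forall i, half_integer (f i)) ->
  (1 <= q)%N ->
  (2 * q <= #|[set i | f i == k%:~R / 2]|)%N ->
  exists (p : nat) (a : 'I_n -> R),
    filler_move p a /\
    forall S : {set 'I_n}, greedy_choice (fun i => f i + a i) p S ->
      exists A B : {set 'I_n},
        [/\ [disjoint A & B], #|A| = q, #|B| = q,
            (forall i, i \in A :|: B -> f i = k%:~R / 2) &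
            (forall i, round_result f a S i =
               if i \in A then (k + 1)%:~R / 2
               else if i \in B then (k - 1)%:~R / 2
               else f i)].
Proof.
move=> hf hq hC.
set K := k%:~R / 2 : R.
have [X [XC cX]] := pick_subset hC; rewrite -/K in XC.
set H := [set i | K < f i].
have fX i : i \in X -> f i = K.
  by move=> iX; move/subsetP: XC => /(_ i iX); rewrite inE => /eqP.
have fH i : i \in H -> K + 1/2 <= f i.
  rewrite inE => hi; case: (hf i) => z hz; rewrite hz; apply: half_gt.
  by rewrite -hz.
have fnH i : i \notin H -> f i <= K.
  by rewrite inE -leNgt.
have dHX : [disjoint H & X].
  apply/pred0P=> i /=; apply/negbTE/negP => /andP[iH iX].
  move: (fH i iH); rewrite fX //; lra.
have HXcard : #|H :|: X| = (#|H| + 2 * q)%N.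
  by rewrite cardsU (disjoint_setI0 dHX) cards0 subn0 cX.
set a := fun i : 'I_n => (if i \in H then 1 else if i \in X then 1/2 else 0) : R.
exists (#|H| + q)%N, a; split.
  split.
  - apply/andP; split; first by lia.
    have := max_card (mem (H :|: X)); rewrite card_ord.
    rewrite -[#|mem _|]/#|H :|: X| HXcard; lia.
  - move=> i; rewrite /a; case: ifP => _; first by rewrite ler01 lexx.
    case: ifP => _; last by rewrite lexx ler01.
    apply/andP; split; lra.
  - have -> : \sum_(i < n) a i =
        \sum_(i < n) ((if i \in H then 1 else 0) + (if i \in X then 1/2 else 0)).
      apply: eq_bigr => i _; rewrite /a.
      case: ifP => iH; case: ifP => iX; rewrite ?addr0 ?add0r //.
      by move/pred0P: dHX => /(_ i) /=; rewrite iH iX.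
    rewrite big_split /= -!big_mkcond /= !sumr_const cX natrD.
    by rewrite -[1 / 2 *+ _]mulr_natr natrM; lra.
move=> S [cS gS].
have gX i : i \in X -> f i + a i = K + 1/2.
  move=> iX; rewrite /a fX // iX.
  suff -> : (i \in H) = false by [].
  by apply/negbTE/negP=> iH; move: (fH i iH); rewrite fX //; lra.
have gH i : i \in H -> f i + a i = f i + 1 by rewrite /a => ->.
have gO i : i \notin H -> i \notin X -> f i + a i = f i.
  by rewrite /a => /negbTE -> /negbTE ->; rewrite addr0.
have HS : H \subset S.
  apply/subsetP=> h hH; apply/negPn/negP=> hS.
  have : S \subset H :\ h.
    apply/subsetP=> i iS; rewrite in_setD1; apply/andP; split.
      by apply/negP=> /eqP eih; move: hS; rewrite -eih iS.
    apply/negPn/negP=> iH; have := gS i h iS hS.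
    rewrite (gH h) //; have := fH h hH.
    case: (boolP (i \in X)) => iX; first by rewrite (gX i) //; lra.
    rewrite (gO i) // => ? ?; have := fnH i iH; lra.
  move/subset_leq_card; rewrite cS => le; have := cardsD1 h H; rewrite hH add1n => e; move: le; by rewrite e addSn ltnNge leq_addr.
have SHX : S \subset H :|: X.
  apply/subsetP=> l lS; apply/negPn/negP; rewrite in_setU negb_or => /andP[lH lX].
  have : l |: (H :|: X) \subset S.
    apply/subsetP=> j; rewrite in_setU1 in_setU => /orP[/eqP -> //|jHX].
    apply/negPn/negP=> jS; have := gS l j lS jS.
    rewrite (gO l) //; have := fnH l lH.
    case/orP: jHX => jj.
      by rewrite (gH j) //; have := fH j jj; lra.
    by rewrite (gX j) //; lra.
  move/subset_leq_card; rewrite cardsU1 in_setU negb_or lH lX /= HXcard cS; lia.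
have SX : S :\: X = H.
  apply/setP=> i; rewrite in_setD; apply/idP/idP.
    case/andP=> iX iS; move/subsetP: SHX => /(_ i iS); rewrite in_setU.
    by case/orP=> // /(negP iX).
  move=> iH; rewrite (subsetP HS) // andbT.
  by apply/negP=> iX; move/pred0P: dHX => /(_ i) /=; rewrite iH iX.
have cSX : #|S :&: X| = q.
  have := cardsID X S; rewrite SX cS addnC; exact: addnI.
exists (X :\: S), (X :&: S); split.
- rewrite -setI_eq0; apply/eqP/setP=> i; rewrite !in_setI in_setD in_set0.
  by case: (i \in S); case: (i \in X).
- have := cardsID S X; rewrite cX setIC cSX => e; apply/eqP; rewrite -(eqn_add2l q) e.
  by rewrite mul2n addnn.
- by rewrite setIC.
- move=> i; rewrite in_setU in_setD in_setI => /orP[/andP[_ iX]|/andP[iX _]]; exact: fX.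
move=> i; rewrite /round_result in_setD in_setI.
case: (boolP (i \in X)) => iX /=.
  rewrite andbT (gX i iX).
  case: (boolP (i \in S)) => iS /=; rewrite ?intrD ?intrB /= /K; lra.
rewrite andbF.
case: (boolP (i \in H)) => iH.
  by rewrite (subsetP HS) // gH //; lra.
have iS : i \notin S.
  by apply/negP=> iS; move/subsetP: SHX => /(_ i iS); rewrite in_setU (negbTE iH) (negbTE iX).
by rewrite (negbTE iS) gO // subr0.
Qed.
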